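(* Let $\gamma\in[0,1)$. For a bounded function $U:\mathbb{R}^n\to\mathbb{R}$ define the Bellman backup $$B[U](x)=\min\Big\{c(x),\ \max\big\{r(x),\ \gamma\max_{u\in\mathcal{U}}\min_{d\in\mathcal{D}} U(f(x,u,d))\big\}\Big\}.$$ Then the value function $V$ defined in the context is the unique (bounded) solution of $V=B[V]$, and for all bounded functions $V_1,V_2:\mathbb{R}^n\to\mathbb{R}$, $\|B[V_1]-B[V_2]\|_\infty\le\gamma\|V_1-V_2\|_\infty$.
   Context: Setting: States $x\in\mathbb{R}^n$; compact sets $\mathcal{U}\subseteq\mathbb{R}^m$ (controls) and $\mathcal{D}\subseteq\mathbb{R}^\ell$ (disturbances); dynamics $f:\mathbb{R}^n\times\mathcal{U}\times\mathcal{D}\to\mathbb{R}^n$, Lipschitz continuous in the state. For sequences $\mathbf{u}=\{u_t\}_{t\ge0}\subset\mathcal{U}$, $\mathbf{d}=\{d_t\}_{t\ge0}\subset\mathcal{D}$, the trajectory is $\xi_x^{\mathbf{u},\mathbf{d}}(0)=x$, $\xi_x^{\mathbf{u},\mathbf{d}}(t+1)=f(\xi_x^{\mathbf{u},\mathbf{d}}(t),u_t,d_t)$ for $t\in\mathbb{Z}_+$. Let $r,c:\mathbb{R}^n\to\mathbb{R}$ be bounded Lipschitz continuous functions. A map $\phi$ from control sequences to disturbance sequences is a non-anticipative strategy if whenever $u_t=\bar u_t$ for all $t\in\{0,\dots,T\}$, then $\phi(\mathbf{u})_t=\phi(\bar{\mathbf{u}})_t$ for all $t\in\{0,\dots,T\}$;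 $\Phi$ is the set of all such strategies. Value function: $$V(x)=\inf_{\phi\in\Phi}\ \sup_{\mathbf{u}}\ \sup_{t\in\mathbb{Z}_+}\ \min\Big\{\gamma^t r\big(\xi_x^{\mathbf{u},\phi(\mathbf{u})}(t)\big),\ \min_{\tau=0,\dots,t}\gamma^\tau c\big(\xi_x^{\mathbf{u},\phi(\mathbf{u})}(\tau)\big)\Big\}$$ (the paper writes $\max_{\mathbf{u}}$ over control sequences). $\|\cdot\|_\infty$ is the supremum norm over $\mathbb{R}^n$. *)

(* Defs.v *)
From HB Require Import structures.
From mathcomp Require Import all_boot all_order all_algebra.
From mathcomp Require Import all_classical all_reals all_analysis.
Set Implicit Arguments. Unset Strict Implicit. Unset Printing Implicit Defensive.
Import Order.TTheory GRing.Theory Num.Theory.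
Import numFieldNormedType.Exports.
Local Open Scope classical_set_scope.
Local Open Scope ring_scope.

Section Defs.
Variables (R : realType) (n m l : nat).
Local Notation X := 'rV[R]_n.
Local Notation Uv := 'rV[R]_m.
Local Notation Dv := 'rV[R]_l.

Definition lipschitz_fun (g : X -> R) : Prop :=
  exists L : R, forall x y, `|g x - g y| <= L * `|x - y|.

Definition lipschitz_in_state (Ucal : set Uv) (Dcal : set Dv)
  (f : X -> Uv -> Dv -> X) : Prop :=
  exists L : R, forall x y u d, Ucal u -> Dcal d ->
    `|f x u d - f y u d| <= L * `|x - y|.

Definition supnorm (g : X -> R) : R := sup [set `|g x| | x in [set: X]].

Fixpoint traj (f : X -> Uv -> Dv -> X) (x : X) (u : nat -> Uv) (d : nat -> Dv)
  (t : nat) : X :=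
  match t with
  | 0 => x
  | t'.+1 => f (traj f x u d t') (u t') (d t')
  end.

Definition seq_in (T : Type) (A : set T) (s : nat -> T) : Prop := forall t, A (s t).

Definition nonanticipative (Ucal : set Uv) (Dcal : set Dv)
  (phi : (nat -> Uv) -> (nat -> Dv)) : Prop :=
  (forall u, seq_in Ucal u -> seq_in Dcal (phi u)) /\
  (forall u ubar T, seq_in Ucal u -> seq_in Ucal ubar ->
     (forall t, (t <= T)%N -> u t = ubar t) ->
     forall t, (t <= T)%N -> phi u t = phi ubar t).

Fixpoint runmin (gamma : R) (c : X -> R) (xi : nat -> X) (t : nat) : R :=
  match t with
  | 0 => c (xi 0%N)
  | t'.+1 => Num.min (runmin gamma c xi t') (gamma ^+ t'.+1 * c (xi t'.+1))
  end.

Definition payoff (gamma : R) (f : X -> Uv -> Dv -> X) (r c : X -> R)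
  (x : X) (u : nat -> Uv) (d : nat -> Dv) : R :=
  sup [set Num.min (gamma ^+ t * r (traj f x u d t)) (runmin gamma c (traj f x u d) t)
      | t in [set: nat]].

Definition value (gamma : R) (Ucal : set Uv) (Dcal : set Dv)
  (f : X -> Uv -> Dv -> X) (r c : X -> R) (x : X) : R :=
  inf [set sup [set payoff gamma f r c x u (phi u) | u in seq_in Ucal]
      | phi in nonanticipative Ucal Dcal].

(* Bellman backup (max/min over U, D read as sup/inf) *)
Definition bellman (gamma : R) (Ucal : set Uv) (Dcal : set Dv)
  (f : X -> Uv -> Dv -> X) (r c : X -> R) (W : X -> R) (x : X) : R :=
  Num.min (c x)
    (Num.max (r x)
       (gamma * sup [set inf [set W (f x u d) | d in Dcal] | u in Ucal])).

End Defs.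

(* Main.v *)
Require Import Defs.
From HB Require Import structures.
From mathcomp Require Import all_boot all_order all_algebra.
From mathcomp Require Import all_classical all_reals all_analysis.
From mathcomp Require Import lra.
Import Order.TTheory GRing.Theory Num.Theory.
Import numFieldNormedType.Exports.
Local Open Scope classical_set_scope.
Local Open Scope ring_scope.

Section Gen.
Set Implicit Arguments. Unset Strict Implicit.
Variable R : realType.
Implicit Types (a b e : R).

Lemma sup_ub (T : Type) (A : set T) (F : T -> R) b u :
  (forall v, A v -> F v <= b) -> A u -> F u <= sup [set F v | v in A].
Proof.
move=> Hb Au; apply: sup_upper_bound; last by exists u.
split; first by exists (F u); exists u.
by exists b => _ [v Av <-]; apply: Hb.
Qed.

Lemma sup_le (T : Type) (A : set T) (F : T -> R) b :
  A !=set0 -> (forall v, A v -> F v <= b) -> sup [set F v | v in A] <= b.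
Proof.
move=> [u Au] Hb; apply: ge_sup; first by exists (F u); exists u.
by move=> _ [v Av <-]; apply: Hb.
Qed.

Lemma inf_lb (T : Type) (A : set T) (F : T -> R) b u :
  (forall v, A v -> b <= F v) -> A u -> inf [set F v | v in A] <= F u.
Proof.
move=> Hb Au; apply: ge_inf; last by exists u.
by exists b => _ [v Av <-]; apply: Hb.
Qed.

Lemma inf_ge (T : Type) (A : set T) (F : T -> R) b :
  A !=set0 -> (forall v, A v -> b <= F v) -> b <= inf [set F v | v in A].
Proof.
move=> [u Au] Hb; apply: lb_le_inf; first by exists (F u); exists u.
by move=> _ [v Av <-]; apply: Hb.
Qed.

Lemma sup_adh (T : Type) (A : set T) (F : T -> R) b e :
  A !=set0 -> (forall v, A v -> F v <= b) -> 0 < e ->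
  exists2 u, A u & sup [set F v | v in A] - e < F u.
Proof.
move=> [u Au] Hb e0.
have hs : has_sup [set F v | v in A].
  split; first by exists (F u); exists u.
  by exists b => _ [v Av <-]; apply: Hb.
have [_ [v Av <-] H] := @sup_adherent R [set F v | v in A] e e0 hs.
by exists v.
Qed.

Lemma inf_adh (T : Type) (A : set T) (F : T -> R) b e :
  A !=set0 -> (forall v, A v -> b <= F v) -> 0 < e ->
  exists2 u, A u & F u < inf [set F v | v in A] + e.
Proof.
move=> [u Au] Hb e0.
have hs : has_inf [set F v | v in A].
  split; first by exists (F u); exists u.
  by exists b => _ [v Av <-]; apply: Hb.
have [_ [v Av <-] H] := @inf_adherent R [set F v | v in A] e e0 hs.
by exists v.
Qed.

Lemma sup_comm (T : Type) (A : set T) (F : T -> R) (g : R -> R) b :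
  A !=set0 -> (forall v, A v -> F v <= b) ->
  (forall x y, x <= y -> g x <= g y) ->
  (forall y e, 0 <= e -> g (y + e) <= g y + e) ->
  sup [set g (F v) | v in A] = g (sup [set F v | v in A]).
Proof.
move=> A0 Hb Hh Hl.
have H1 : forall v, A v -> g (F v) <= g (sup [set F v | v in A]).
  by move=> v Av; apply: Hh; apply: (sup_ub Hb Av).
apply/eqP; rewrite eq_le; apply/andP; split; first exact: sup_le.
apply/ler_addgt0Pr => e e0.
have [u Au Hu] := sup_adh A0 Hb e0.
apply: (le_trans (Hh _ (F u + e) _)); first by lra.
apply: (le_trans (Hl _ _ (ltW e0))); rewrite lerD2r.
exact: sup_ub H1 Au.
Qed.

End Gen.

Ltac mm := rewrite ?minEle ?maxEle; repeat match goal with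
 | H : context [if _ then _ else _] |- _ => move: H
 | |- context [if ?a <= ?b then _ else _] => case: (lerP a b) => ? end; intros; lra.

Lemma sup_comm_ge (R : realType) (T : Type) (A : set T) (F : T -> R) (g : R -> R) b :
  A !=set0 -> (forall v, A v -> F v <= b) ->
  (forall x y, x <= y -> g x <= g y) ->
  (forall y e, 0 <= e -> g (y + e) <= g y + e) ->
  g (sup [set F v | v in A]) <= sup [set g (F v) | v in A].
Proof. by move=> A0 Hb Hh Hl; rewrite (sup_comm A0 Hb Hh Hl). Qed.

Section Main.
Set Implicit Arguments. Unset Strict Implicit.
Variables (R : realType) (n m l : nat).
Local Notation X := 'rV[R]_n.
Local Notation Uv := 'rV[R]_m.
Local Notation Dv := 'rV[R]_l.
Variables (Ucal : set Uv) (Dcal : set Dv) (f : X -> Uv -> Dv -> X) (r c : X -> R) (gamma M : R).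
Hypotheses (U0 : Ucal !=set0) (D0 : Dcal !=set0) (g0 : 0 <= gamma) (g1 : gamma <= 1)
  (rM : forall x, `|r x| <= M) (cM : forall x, `|c x| <= M).

Definition gB (x : X) (y : R) := Num.min (c x) (Num.max (r x) (gamma * y)).

Lemma gB_homo x y y' : y <= y' -> gB x y <= gB x y'.
Proof.
move=> h; have : gamma * y <= gamma * y' by rewrite ler_wpM2l.
rewrite /gB; move: (gamma * y) (gamma * y') => a b; mm.
Qed.

Lemma gB_lip x y e : 0 <= e -> gB x (y + e) <= gB x y + e.
Proof.
move=> e0; have : gamma * (y + e) <= gamma * y + e by rewrite mulrDr lerD2l ler_piMl.
have : gamma * y <= gamma * (y + e) by rewrite ler_wpM2l // lerDl.
rewrite /gB; move: (gamma * y) (gamma * (y + e)) => a b; mm.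
Qed.

Lemma M0 : 0 <= M.
Proof. exact: le_trans (normr_ge0 _) (rM 0). Qed.

Lemma min_bnd a b : `|a| <= M -> `|b| <= M -> `|Num.min a b| <= M.
Proof. rewrite !ler_norml => /andP[? ?] /andP[? ?]; apply/andP; split; mm. Qed.

Lemma runmin_bnd (xi : nat -> X) t : `|runmin gamma c xi t| <= M.
Proof.
elim: t => [|t IH] /=; first exact: cM.
apply: min_bnd => //.
have h1 : 0 <= gamma ^+ t.+1 := exprn_ge0 _ g0.
have h2 : gamma ^+ t.+1 <= 1 := exprn_ile1 _ g0 g1.
move: (cM (xi t.+1)); rewrite !ler_norml => /andP[? ?]; apply/andP; split; nra.
Qed.

Lemma term_bnd (xi : nat -> X) t :
  `|Num.min (gamma ^+ t * r (xi t)) (runmin gamma c xi t)| <= M.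
Proof.
apply: min_bnd; last exact: runmin_bnd.
have h1 : 0 <= gamma ^+ t := exprn_ge0 _ g0.
have h2 : gamma ^+ t <= 1 := exprn_ile1 _ g0 g1.
move: (rM (xi t)); rewrite !ler_norml => /andP[? ?]; apply/andP; split; nra.
Qed.

Lemma traj_shift x u d t :
  traj f x u d t.+1 = traj f (f x (u 0%N) (d 0%N)) (fun k => u k.+1) (fun k => d k.+1) t.
Proof.
elim: t => [|t IH] //.
by change (traj f x u d t.+2) with (f (traj f x u d t.+1) (u t.+1) (d t.+1)); rewrite IH.
Qed.

Lemma runmin_shift (xi xi' : nat -> X) t : (forall k, xi k.+1 = xi' k) ->
  runmin gamma c xi t.+1 = Num.min (c (xi 0%N)) (gamma * runmin gamma c xi' t).
Proof.
move=> H; elim: t => [|t IH]; first by rewrite /= expr1 H.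
change (runmin gamma c xi t.+2) with
  (Num.min (runmin gamma c xi t.+1) (gamma ^+ t.+2 * c (xi t.+2))).
change (runmin gamma c xi' t.+1) with
  (Num.min (runmin gamma c xi' t) (gamma ^+ t.+1 * c (xi' t.+1))).
by rewrite IH minr_pMr // -minA exprS -mulrA H.
Qed.

Lemma payoff_bnd x u d : `|payoff gamma f r c x u d| <= M.
Proof.
have bnd0 : forall t, [set: nat] t -> Num.min (gamma ^+ t * r (traj f x u d t))
      (runmin gamma c (traj f x u d) t) <= M.
  by move=> t _; move: (term_bnd (traj f x u d) t); rewrite ler_norml => /andP[].
rewrite ler_norml; apply/andP; split.
  have h := sup_ub (u := 0%N) bnd0 I.
  move: (term_bnd (traj f x u d) 0); rewrite ler_norml => /andP[h1 _].
  exact: le_trans h1 h.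
exact: sup_le.
Qed.

Lemma payoff_dec x u d :
  payoff gamma f r c x u d =
  gB x (payoff gamma f r c (f x (u 0%N) (d 0%N)) (fun k => u k.+1) (fun k => d k.+1)).
Proof.
set y := f x _ _; set u' := fun k => _; set d' := fun k => _.
have Hs : forall t, traj f x u d t.+1 = traj f y u' d' t by move=> t; exact: traj_shift.
have Ha : forall t, Num.min (gamma ^+ t.+1 * r (traj f x u d t.+1))
      (runmin gamma c (traj f x u d) t.+1) =
    Num.min (c x) (gamma * Num.min (gamma ^+ t * r (traj f y u' d' t))
      (runmin gamma c (traj f y u' d') t)).
  move=> t; rewrite (runmin_shift _ Hs) Hs /= exprS minr_pMr // -mulrA.
  by rewrite minCA.
have bnd : forall t, [set: nat] t -> Num.min (gamma ^+ t * r (traj f y u' d' t))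
      (runmin gamma c (traj f y u' d') t) <= M.
  by move=> t _; move: (term_bnd (traj f y u' d') t); rewrite ler_norml => /andP[].
have bnd0 : forall t, [set: nat] t -> Num.min (gamma ^+ t * r (traj f x u d t))
      (runmin gamma c (traj f x u d) t) <= M.
  by move=> t _; move: (term_bnd (traj f x u d) t); rewrite ler_norml => /andP[].
rewrite /payoff.
set S' := (X in gB x X).
apply/eqP; rewrite eq_le; apply/andP; split.
  apply: sup_le; first by exists 0%N.
  move=> [|t] _.
    rewrite /= expr0 mul1r /gB; move: (gamma * S') => z; mm.
  rewrite Ha; apply: le_trans (gB_homo x (sup_ub (u := t) bnd I)).
  rewrite /gB; move: (gamma * _) => z; mm.
have hA : Num.min (r x) (c x) <= sup [set Num.min (gamma ^+ t * r (traj f x u d t))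
      (runmin gamma c (traj f x u d) t) | t in [set: nat]].
  by have := sup_ub (u := 0%N) bnd0 I; rewrite /= expr0 mul1r.
have hB : Num.min (c x) (gamma * S') <= sup [set Num.min (gamma ^+ t * r (traj f x u d t))
      (runmin gamma c (traj f x u d) t) | t in [set: nat]].
  have hh : forall a b, a <= b -> Num.min (c x) (gamma * a) <= Num.min (c x) (gamma * b).
    move=> a b ab; have : gamma * a <= gamma * b by rewrite ler_wpM2l.
    move: (gamma * a) (gamma * b) => a' b'; mm.
  have hl : forall a e, 0 <= e -> Num.min (c x) (gamma * (a + e)) <= Num.min (c x) (gamma * a) + e.
    move=> a e e0; have : gamma * (a + e) <= gamma * a + e by rewrite mulrDr lerD2l ler_piMl.
    have : gamma * a <= gamma * (a + e) by rewrite ler_wpM2l // lerDl.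
    move: (gamma * a) (gamma * (a + e)) => a' b'; mm.
  have ex0 : [set: nat] !=set0 by exists 0%N.
  have HH := @sup_comm_ge _ _ _ _ (fun z => Num.min (c x) (gamma * z)) M ex0 bnd hh hl.
  apply: (le_trans HH).
  apply: sup_le; first by exists 0%N.
  move=> t _ /=; rewrite -Ha; exact: sup_ub bnd0 I.
apply: (le_trans (_ : _ <= Num.max (Num.min (r x) (c x)) (Num.min (c x) (gamma * S')))).
  rewrite /gB; move: (gamma * S') => z; mm.
by rewrite ge_max hA hB.
Qed.

Local Notation V := (value gamma Ucal Dcal f r c).
Local Notation S x phi := (sup [set payoff gamma f r c x u (phi u) | u in seq_in Ucal]).
Local Notation Ix W x u0 := (inf [set W (f x u0 d) | d in Dcal]).
Local Notation Qx W x := (sup [set Ix W x u0 | u0 in Ucal]).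

Lemma seqU0 : seq_in Ucal !=set0.
Proof. by have [u0 Hu0] := U0; exists (fun _ => u0). Qed.

Lemma na0 : nonanticipative Ucal Dcal !=set0.
Proof. by have [d0 Hd0] := D0; exists (fun _ _ => d0); split => [u _ t //| u ub T _ _ _ t _ //]. Qed.

Lemma pb1 x u d : payoff gamma f r c x u d <= M.
Proof. by have := payoff_bnd x u d; rewrite ler_norml => /andP[]. Qed.
Lemma pb2 x u d : - M <= payoff gamma f r c x u d.
Proof. by have := payoff_bnd x u d; rewrite ler_norml => /andP[]. Qed.

Lemma S_bnd x phi : - M <= S x phi /\ S x phi <= M.
Proof.
split; last by apply: sup_le; [exact: seqU0| move=> u _; exact: pb1].
have [u Hu] := seqU0.
apply: le_trans (pb2 x u (phi u)) _.
by apply: (sup_ub (b := M)) Hu => v _; exact: pb1.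
Qed.

Lemma V_bnd x : - M <= V x /\ V x <= M.
Proof.
split.
  by apply: inf_ge; [exact: na0 | move=> phi _; case: (S_bnd x phi)].
have [phi Hphi] := na0.
apply: le_trans (proj2 (S_bnd x phi)).
by apply: (inf_lb (b := - M)) Hphi => psi _; case: (S_bnd x psi).
Qed.

Lemma I_bnd W x u0 : (forall z, - M <= W z /\ W z <= M) ->
  - M <= Ix W x u0 /\ Ix W x u0 <= M.
Proof.
move=> HW; split; first by apply: inf_ge => // d _; case: (HW (f x u0 d)).
have [d Hd] := D0.
apply: le_trans (proj2 (HW (f x u0 d))).
by apply: (inf_lb (b := - M)) Hd => e _; case: (HW (f x u0 e)).
Qed.

Definition cons0 (u0 : Uv) (u' : nat -> Uv) : nat -> Uv :=
  fun t => match t with 0%N => u0 | k.+1 => u' k end.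

Lemma cons0_in u0 u' : Ucal u0 -> seq_in Ucal u' -> seq_in Ucal (cons0 u0 u').
Proof. by move=> H1 H2 t; case: t => [|t] /=. Qed.

Lemma gB_homo' x : forall a b, a <= b -> gB x a <= gB x b.
Proof. move=> a b; exact: gB_homo. Qed.
Lemma gB_lip' x : forall a e, 0 <= e -> gB x (a + e) <= gB x a + e.
Proof. move=> a e; exact: gB_lip. Qed.

Lemma dpp_ge x : gB x (Qx V x) <= V x.
Proof.
apply: inf_ge; first exact: na0.
move=> phi [Hp1 Hp2].
have Ib : forall u0, Ucal u0 -> Ix V x u0 <= M.
  by move=> u0 _; case: (I_bnd x u0 V_bnd).
apply: le_trans (sup_comm_ge U0 Ib (gB_homo' x) (gB_lip' x)) _.
apply: sup_le => // u0 Hu0.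
pose psi := fun u' t => phi (cons0 u0 u') t.+1.
pose ustar := fun _ : nat => u0.
have Hus : seq_in Ucal ustar by [].
pose d0 := phi (cons0 u0 ustar) 0%N.
have Hd0 : Dcal d0 by apply: Hp1; exact: cons0_in.
have Hpsi : nonanticipative Ucal Dcal psi.
  split.
    by move=> u' Hu' t; apply: Hp1; exact: cons0_in.
  move=> u' ub T Hu' Hub Heq t Ht.
  apply: (Hp2 _ _ T.+1); try exact: cons0_in.
    by move=> [|j] Hj //=; apply: Heq.
  exact: Ht.
have st1 : Ix V x u0 <= V (f x u0 d0).
  by apply: (inf_lb (b := - M)) Hd0 => e _; case: (V_bnd (f x u0 e)).
have st2 : V (f x u0 d0) <= S (f x u0 d0) psi.
  by apply: (inf_lb (b := - M)) Hpsi => e _; case: (S_bnd (f x u0 d0) e).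
apply: le_trans (gB_homo x (le_trans st1 st2)) _.
have Pb : forall u', seq_in Ucal u' -> payoff gamma f r c (f x u0 d0) u' (psi u') <= M.
  by move=> u' _; exact: pb1.
apply: le_trans (sup_comm_ge seqU0 Pb (gB_homo' x) (gB_lip' x)) _.
apply: sup_le; first exact: seqU0.
move=> u' Hu'.
have E : payoff gamma f r c x (cons0 u0 u') (phi (cons0 u0 u')) =
         gB x (payoff gamma f r c (f x u0 d0) u' (psi u')).
  have e1 : phi (cons0 u0 u') 0%N = d0.
    apply: (Hp2 _ _ 0%N) => //; try exact: cons0_in.
    by move=> [|j].
  rewrite payoff_dec e1; reflexivity.
rewrite -E.
apply: (sup_ub (F := fun u => payoff gamma f r c x u (phi u)) (u := cons0 u0 u') (b := M)); first by move=> v _; exact: pb1.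
exact: cons0_in.
Qed.

Lemma dpp_le x : V x <= gB x (Qx V x).
Proof.
apply/ler_addgt0Pr => e e0.
set eps := e / 2.
have eps0 : 0 < eps by rewrite divr_gt0.
have [dst Hdst] := D0.
have ch1 : forall u0, exists d, Dcal d /\ (Ucal u0 -> V (f x u0 d) < Ix V x u0 + eps).
  move=> u0; case: (pselect (Ucal u0)) => Hu; last by exists dst.
  have [d Dd Hd] := inf_adh (F := fun d => V (f x u0 d)) D0
     (fun d _ => proj1 (V_bnd (f x u0 d))) eps0.
  by exists d.
have [d0 Hd0] := boolp.choice ch1.
have ch2 : forall y, exists psi, nonanticipative Ucal Dcal psi /\ S y psi < V y + eps.
  move=> y.
  have [psi Hpsi H] := inf_adh (A := nonanticipative Ucal Dcal)
     (F := fun psi => S y psi) na0 (fun psi _ => proj1 (S_bnd y psi)) eps0.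
  by exists psi.
have [Psi HPsi] := boolp.choice ch2.
pose phi := fun (u : nat -> Uv) (t : nat) => match t with
  | 0%N => d0 (u 0%N)
  | k.+1 => Psi (f x (u 0%N) (d0 (u 0%N))) (fun j => u j.+1) k end.
have Hphi : nonanticipative Ucal Dcal phi.
  split.
    move=> u Hu [|t] /=; first exact: (Hd0 _).1.
    by apply: (HPsi _).1.1 => j; exact: Hu.
  move=> u ub T Hu Hub Heq [|t] Ht /=; first by rewrite Heq.
  rewrite (Heq 0%N) //.
  case: T Heq Ht => [|T] Heq Ht //.
  apply: ((HPsi _).1.2 _ _ T) => //; try by move=> j; [exact: Hu | exact: Hub].
  by move=> j Hj; apply: Heq.
have HV : V x <= S x phi.
  by apply: (inf_lb (b := - M)) Hphi => psi _; case: (S_bnd x psi).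
apply: (le_trans HV).
apply: sup_le; first exact: seqU0.
move=> u Hu.
rewrite payoff_dec /=.
set y := f x (u 0%N) (d0 (u 0%N)).
have [HP1 HP2] := HPsi y.
have [Hd1 Hd2] := Hd0 (u 0%N).
have h1 : payoff gamma f r c y (fun k => u k.+1) (Psi y (fun k => u k.+1)) <= S y (Psi y).
  apply: (sup_ub (F := fun v => payoff gamma f r c y v (Psi y v)) (u := fun k => u k.+1) (b := M)); first by move=> v _; exact: pb1.
  by move=> j; exact: Hu.
have Ib : forall u0, Ucal u0 -> Ix V x u0 <= M.
  by move=> u0 _; case: (I_bnd x u0 V_bnd).
have h2 : Ix V x (u 0%N) <= Qx V x by apply: (sup_ub Ib).
have h3 := Hd2 (Hu 0%N).
apply: le_trans (gB_homo x (_ : _ <= Qx V x + e)) _.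
  rewrite /eps in HP2 h3; lra.
exact: gB_lip (ltW e0).
Qed.

Lemma dpp : V = bellman gamma Ucal Dcal f r c V.
Proof.
apply: funext => x; apply/eqP; rewrite eq_le dpp_le.
exact: dpp_ge.
Qed.

End Main.

Section Contr.
Set Implicit Arguments. Unset Strict Implicit.
Variables (R : realType) (n m l : nat).
Local Notation X := 'rV[R]_n.
Local Notation Uv := 'rV[R]_m.
Local Notation Dv := 'rV[R]_l.
Variables (Ucal : set Uv) (Dcal : set Dv) (f : X -> Uv -> Dv -> X) (r c : X -> R) (gamma : R).
Hypotheses (U0 : Ucal !=set0) (D0 : Dcal !=set0) (g0 : 0 <= gamma).
Local Notation Ix W x u0 := (inf [set W (f x u0 d) | d in Dcal]).
Local Notation Qx W x := (sup [set Ix W x u0 | u0 in Ucal]).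

Lemma bnd_of (W : X -> R) : bounded_fun W -> exists M, forall z, `|W z| <= M.
Proof.
move=> /ex_bound => -[|M HM]; first exact: (globally_properfilter (a := 0)).
exists M => z; exact: HM.
Qed.

Lemma Qle (V1 V2 : X -> R) K M1 M2 x :
  (forall z, `|V1 z| <= M1) -> (forall z, `|V2 z| <= M2) ->
  (forall z, V1 z <= V2 z + K) -> Qx V1 x <= Qx V2 x + K.
Proof.
move=> H1 H2 HK.
have b1 : forall z, - M1 <= V1 z by move=> z; move: (H1 z); rewrite ler_norml => /andP[].
have b2 : forall z, V2 z <= M2 by move=> z; move: (H2 z); rewrite ler_norml => /andP[].
have b2' : forall z, - M2 <= V2 z by move=> z; move: (H2 z); rewrite ler_norml => /andP[].
have Ib : forall u, Ucal u -> Ix V2 x u <= M2.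
  move=> u _; have [d Hd] := D0.
  apply: le_trans (b2 (f x u d)).
  by apply: (inf_lb (F := fun d => V2 (f x u d)) (b := - M2)) Hd => e _.
apply: sup_le => // u Hu.
have I1 : Ix V1 x u <= Ix V2 x u + K.
  rewrite -lerBlDr; apply: inf_ge => // d Hd.
  have := inf_lb (F := fun d => V1 (f x u d)) (b := - M1) (fun e _ => b1 _) Hd.
  have := HK (f x u d); rewrite /=; lra.
have I2 : Ix V2 x u <= Qx V2 x := sup_ub (F := fun u => Ix V2 x u) Ib Hu.
lra.
Qed.

Lemma contr (V1 V2 : X -> R) : bounded_fun V1 -> bounded_fun V2 ->
  supnorm (bellman gamma Ucal Dcal f r c V1 \- bellman gamma Ucal Dcal f r c V2)
  <= gamma * supnorm (V1 \- V2).
Proof.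
move=> /bnd_of [M1 H1] /bnd_of [M2 H2].
set K := supnorm (V1 \- V2).
have HK : forall z, `|V1 z - V2 z| <= K.
  move=> z; apply: (sup_ub (F := fun z => `|(V1 \- V2) z|) (b := M1 + M2)) => // w _ /=.
  by apply: le_trans (ler_normB _ _) _; apply: lerD.
have K1 : forall z, V1 z <= V2 z + K.
  by move=> z; move: (HK z); rewrite ler_norml => /andP[]; lra.
have K2 : forall z, V2 z <= V1 z + K.
  by move=> z; move: (HK z); rewrite ler_norml => /andP[]; lra.
apply: sup_le; first by exists 0.
move=> x _ /=; rewrite /bellman.
have q1 := Qle x H1 H2 K1.
have q2 := Qle x H2 H1 K2.
have : `|gamma * Qx V1 x - gamma * Qx V2 x| <= gamma * K.
  rewrite -mulrBr normrM ger0_norm // ler_wpM2l // ler_norml; apply/andP; split; lra.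
move: (gamma * Qx V1 x) (gamma * Qx V2 x) (gamma * K) => a b k.
rewrite !ler_norml => /andP[? ?]; apply/andP; split; mm.
Qed.

End Contr.


Theorem theorem2 (R : realType) (n m l : nat)
  (Ucal : set 'rV[R]_m) (Dcal : set 'rV[R]_l)
  (f : 'rV[R]_n -> 'rV[R]_m -> 'rV[R]_l -> 'rV[R]_n)
  (r c : 'rV[R]_n -> R) (gamma : R) :
  compact Ucal -> compact Dcal ->
  Ucal !=set0 -> Dcal !=set0 ->
  lipschitz_in_state Ucal Dcal f ->
  bounded_fun r -> lipschitz_fun r ->
  bounded_fun c -> lipschitz_fun c ->
  0 <= gamma -> gamma < 1 ->
  let V := value gamma Ucal Dcal f r c in
  let B := bellman gamma Ucal Dcal f r c in
  [/\ bounded_fun V,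
      V = B V,
      (forall W : 'rV[R]_n -> R, bounded_fun W -> W = B W -> W = V) &
      (forall V1 V2 : 'rV[R]_n -> R, bounded_fun V1 -> bounded_fun V2 ->
         supnorm (B V1 \- B V2) <= gamma * supnorm (V1 \- V2))].
Proof.
move=> _ _ U0 D0 _ br _ bc _ g0 g1 V B.
have [Mr HMr] := bnd_of br.
have [Mc HMc] := bnd_of bc.
set M := Num.max Mr Mc.
have rM : forall x, `|r x| <= M by move=> x; rewrite le_max HMr.
have cM : forall x, `|c x| <= M by move=> x; rewrite le_max HMc orbT.
have g1' : gamma <= 1 by exact: ltW.
have Vb := V_bnd f U0 D0 g0 g1' rM cM.
have bV : bounded_fun V.
  have := @ex_bound _ _ _ V (globally setT) (@globally_properfilter _ setT 0 I); case=> _; apply.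
  exists M => x _ /=; rewrite ler_norml; have [? ?] := Vb x; apply/andP; split => //.
have HV : V = B V := dpp f U0 D0 g0 g1' rM cM.
split => //.
- move=> W bW HW.
  have h := contr f r c U0 D0 g0 bW bV.
  rewrite -/B -HW -HV in h.
  have [MW HMW] := bnd_of bW.
  set K := supnorm (W \- V) in h.
  have HK : forall z, `|W z - V z| <= K.
    move=> z; apply: (sup_ub (F := fun z => `|(W \- V) z|) (b := MW + M)) => // w _ /=.
    apply: le_trans (ler_normB _ _) _; apply: lerD => //.
    by rewrite ler_norml; have [? ?] := Vb w; apply/andP; split.
  have K0 : 0 <= K := le_trans (normr_ge0 _) (HK 0).
  have K0' : K <= 0 by nra.
  apply: funext => z; apply/eqP; rewrite -subr_eq0 -normr_le0.
  exact: le_trans (HK z) K0'.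
- move=> V1 V2 b1 b2; have hh := contr f r c U0 D0 g0 b1 b2; exact: hh.
Qed.
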